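(* Let $\omega:[I^-,I^+]\to\mathbb{R}$ be $C^1$ with $\omega'(I)>0$ for all $I\in[I^-,I^+]$, let $T(I,\theta)=(I,\theta+\omega(I))$ on $[I^-,I^+]\times\mathbb{T}$, and let $T_\epsilon:[I^-,I^+]\times\mathbb{T}\to\mathbb{R}\times\mathbb{T}$ be a family of maps with $\|T_\epsilon-T\|_{C^1}\le C\epsilon$ for a constant $C$ independent of $\epsilon$. Let $\gamma_1=\{(I,f(I)):I\in(I_1,I_2)\}$ and $\gamma_2=\{(I,g(I)):I\in(I_1,I_2)\}$ be $C^1$ graphs over the same interval $(I_1,I_2)\subset[I^-,I^+]$, let $x_1\in\gamma_1$ and $\delta>0$. Then there exist $\epsilon_0>0$, $N\in\mathbb{N}$, $x_2\in\gamma_2$ and $\delta'>0$ such that for all $\epsilon\in(0,\epsilon_0)$, $T_\epsilon^N(B_\delta(x_1))\supset B_{\delta'}(x_2)$ (where $T_\epsilon^N$ is well defined on $B_\delta(x_1)$).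
   Context: $\mathbb{T}=\mathbb{R}/\mathbb{Z}$; $B_r(x)$ denotes the open ball of radius $r$ centred at $x$. *)

(* Defs.v *)
From Stdlib Require Import Reals ZArith.
From Coquelicot Require Import Coquelicot.
Open Scope R_scope.

(* Everything is expressed on the universal cover R x R of the cylinder
   R x T (T = R/Z): a point (I, theta) of R x R represents (I, theta mod 1). *)

Definition pdI (F : R -> R -> R) (I t : R) : R := Derive (fun a => F a t) I.
Definition pdT (F : R -> R -> R) (I t : R) : R := Derive (fun s => F I s) t.

Definition C1_real (h : R -> R) : Prop :=
  forall x, ex_derive h x /\ continuous (Derive h) x.

Definition C1_on_open (lo hi : R) (h : R -> R) : Prop :=
  forall x, lo < x < hi -> ex_derive h x /\ continuous (Derive h) x.

Definition C1_plane (F : R -> R -> R) : Prop :=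
  forall I t,
    ex_derive (fun a => F a t) I /\ ex_derive (fun s => F I s) t /\
    continuous (fun p : R * R => pdI F (fst p) (snd p)) (I, t) /\
    continuous (fun p : R * R => pdT F (fst p) (snd p)) (I, t).

(* Open ball of radius r in the cylinder R x T (Euclidean product metric,
   quotient distance on T), lifted to the cover: y is in B_r(x) iff some
   integer translate of y in theta is at Euclidean distance < r from x. *)
Definition in_cyl_ball (x : R * R) (r : R) (y : R * R) : Prop :=
  exists k : Z, (fst y - fst x) ^ 2 + (snd y - snd x - IZR k) ^ 2 < r ^ 2.

Definition cmap (F G : R -> R -> R) (p : R * R) : R * R :=
  (F (fst p) (snd p), G (fst p) (snd p)).
Definition citer (F G : R -> R -> R) (n : nat) (p : R * R) : R * R :=
  Nat.iter n (cmap F G) p.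

(* Main.v *)
Require Import Defs.
From Stdlib Require Import Reals ZArith Lra Lia.
From Coquelicot Require Import Coquelicot.
Open Scope R_scope.

Lemma exd_cont (h : R -> R) x : ex_derive h x -> continuity_pt h x.
Proof. intro H. apply continuity_pt_filterlim. apply (ex_derive_continuous h x H). Qed.

Lemma mvt_bound (h df : R -> R) (x y M : R) :
 (forall c, Rmin x y <= c <= Rmax x y -> is_derive h c (df c) /\ Rabs (df c) <= M) ->
 Rabs (h x - h y) <= M * Rabs (x - y).
Proof.
  intro H.
  destruct (MVT_gen h y x df) as [c [Hc He]].
  - intros z Hz. apply H. rewrite Rmin_comm, Rmax_comm. lra.
  - intros z Hz. apply exd_cont. exists (df z). apply H. rewrite Rmin_comm, Rmax_comm. lra.
  - rewrite He, Rabs_mult. rewrite (Rabs_minus_sym x y).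
    apply Rmult_le_compat_r. apply Rabs_pos. apply H. rewrite Rmin_comm, Rmax_comm. lra.
Qed.

Lemma lip_cont (h : R -> R) M : (forall x y, Rabs (h x - h y) <= M * Rabs (x - y)) ->
  forall x, continuity_pt h x.
Proof.
  intros H x. unfold continuity_pt, continue_in, limit1_in, limit_in. intros eps He.
  exists (eps / (Rabs M + 1)). split.
  - apply Rdiv_lt_0_compat; [lra| pose proof (Rabs_pos M); lra].
  - intros y [_ Hy]. simpl in *. unfold R_dist in *.
    eapply Rle_lt_trans. apply H.
    pose proof (Rabs_pos M). pose proof (Rle_abs M).
    apply Rle_lt_trans with ((Rabs M + 1) * Rabs (y - x)).
    apply Rmult_le_compat_r. apply Rabs_pos. lra.
    apply Rmult_lt_reg_l with (/(Rabs M + 1)). apply Rinv_0_lt_compat; lra.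
    rewrite <- Rmult_assoc, Rinv_l by lra. rewrite Rmult_1_l.
    unfold Rdiv in Hy. lra.
Qed.

Lemma abs_le x c : Rabs x <= c <-> -c <= x <= c.
Proof. unfold Rabs; destruct Rcase_abs; split; intros; lra. Qed.

Section Step.
Variables (Im Ip L ce : R) (om : R -> R) (F G : R -> R -> R).
Hypothesis Hom_d : forall x, ex_derive om x.
Hypothesis HL : forall x, Im <= x <= Ip -> Rabs (Derive om x) <= L.
Hypothesis HdF : forall I t, ex_derive (fun a => F a t) I /\ ex_derive (fun s => F I s) t.
Hypothesis HdG : forall I t, ex_derive (fun a => G a t) I /\ ex_derive (fun s => G I s) t.
Hypothesis Hb : forall I t, Im <= I <= Ip ->
     Rabs (F I t - I) <= ce /\
     Rabs (G I t - (t + om I)) <= ce /\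
     Rabs (pdI F I t - 1) <= ce /\
     Rabs (pdT F I t) <= ce /\
     Rabs (pdI G I t - Derive om I) <= ce /\
     Rabs (pdT G I t - 1) <= ce.

Lemma inint x y c : Im <= x <= Ip -> Im <= y <= Ip -> Rmin x y <= c <= Rmax x y -> Im <= c <= Ip.
Proof. intros. unfold Rmin, Rmax in *. destruct Rle_dec; lra. Qed.

Lemma om_lip x y : Im <= x <= Ip -> Im <= y <= Ip -> Rabs (om x - om y) <= L * Rabs (x - y).
Proof.
  intros Hx Hy. apply (mvt_bound om (Derive om)). intros c Hc. split.
  apply Derive_correct, Hom_d. apply HL. apply (inint x y c); assumption.
Qed.

Lemma FLI I I' t : Im <= I <= Ip -> Im <= I' <= Ip ->
  Rabs (F I t - F I' t - (I - I')) <= ce * Rabs (I - I').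
Proof.
  intros Hx Hy.
  replace (F I t - F I' t - (I - I')) with (F I t - I - (F I' t - I')) by ring.
  apply (mvt_bound (fun a => F a t - a) (fun a => pdI F a t - 1)). intros c Hc. split.
  - assert (H1 : is_derive (fun a => F a t) c (pdI F c t)) by (unfold pdI; apply Derive_correct; exact (proj1 (HdF c t))).
    assert (H2 : is_derive (fun a : R => a) c 1) by (apply is_derive_Reals, derivable_pt_lim_id).
    exact (is_derive_minus _ _ _ _ _ H1 H2).
  - apply Hb. apply (inint I I' c); assumption.
Qed.

Lemma FLT I t t' : Im <= I <= Ip -> Rabs (F I t - F I t') <= ce * Rabs (t - t').
Proof.
  intros Hx. apply (mvt_bound (fun s => F I s) (fun s => pdT F I s)). intros c Hc. split.
  - unfold pdT; apply Derive_correct; exact (proj2 (HdF I c)).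
  - apply Hb; auto.
Qed.

Lemma GLT I t t' : Im <= I <= Ip -> Rabs (G I t - G I t' - (t - t')) <= ce * Rabs (t - t').
Proof.
  intros Hx.
  replace (G I t - G I t' - (t - t')) with (G I t - t - (G I t' - t')) by ring.
  apply (mvt_bound (fun s => G I s - s) (fun s => pdT G I s - 1)). intros c Hc. split.
  - assert (H1 : is_derive (fun s => G I s) c (pdT G I c)) by (unfold pdT; apply Derive_correct; exact (proj2 (HdG I c))).
    assert (H2 : is_derive (fun a : R => a) c 1) by (apply is_derive_Reals, derivable_pt_lim_id).
    exact (is_derive_minus _ _ _ _ _ H1 H2).
  - apply Hb; auto.
Qed.

Lemma GLI I I' t : Im <= I <= Ip -> Im <= I' <= Ip ->
  Rabs (G I t - G I' t) <= (L + ce) * Rabs (I - I').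
Proof.
  intros Hx Hy. apply (mvt_bound (fun a => G a t) (fun a => pdI G a t)). intros c Hc. split.
  - unfold pdI; apply Derive_correct; exact (proj1 (HdG c t)).
  - assert (Im <= c <= Ip) by (apply (inint I I' c); assumption).
    destruct (Hb c t H) as (_&_&_&_&h&_). pose proof (HL c H).
    apply abs_le in h. apply abs_le in H0. apply abs_le. lra.
Qed.


Lemma step u v m : 0 <= ce -> Im <= u - m -> u + m <= Ip -> ce < m -> ce <= 1/2 -> 0 <= L ->
  exists I t, F I t = u /\ G I t = v /\ Rabs (I - u) <= ce /\
              Rabs (t - (v - om u)) <= (1 + L) * ce.
Proof.
  intros Hce H1 H2 H3 H4 HL0.
  assert (ex1 : forall t, {I | u - m <= I <= u + m /\ F I t - u = 0}).
  { intro t.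
    apply (Ranalysis5.IVT_interv (fun a => F a t - u) (u - m) (u + m)).
    - intros a _. apply (continuity_pt_minus (fun a => F a t) (fun _ => u)); [apply exd_cont; exact (proj1 (HdF a t)) | apply continuity_pt_const; intros x y; reflexivity].
    - lra.
    - destruct (Hb (u - m) t ltac:(lra)) as [h _]. apply abs_le in h. lra.
    - destruct (Hb (u + m) t ltac:(lra)) as [h _]. apply abs_le in h. lra. }
  set (If := fun t => proj1_sig (ex1 t)).
  assert (HIf : forall t, u - m <= If t <= u + m /\ F (If t) t = u).
  { intro t. unfold If. destruct (ex1 t) as [x [hx1 hx2]]. simpl. split; [lra|lra]. }
  assert (HIr : forall t, Im <= If t <= Ip). { intro t. destruct (HIf t). lra. }
  assert (HIu : forall t, Rabs (If t - u) <= ce).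
  { intro t. destruct (HIf t) as [_ e]. destruct (Hb (If t) t (HIr t)) as [h _]. rewrite e in h.
    rewrite Rabs_minus_sym. exact h. }
  assert (HIl : forall t t', Rabs (If t - If t') <= Rabs (t - t')).
  { intros t t'.
    pose proof (FLI (If t) (If t') t (HIr t) (HIr t')) as h1.
    pose proof (FLT (If t') t t' (HIr t')) as h2.
    destruct (HIf t) as [_ e1]. destruct (HIf t') as [_ e2].
    rewrite e1 in h1. rewrite e2 in h2.
    set (A := Rabs (If t - If t')) in *. set (B := Rabs (t - t')) in *.
    assert (A <= ce * A + ce * B).
    { unfold A. replace (If t - If t') with (-(u - F (If t') t - (If t - If t')) + (u - F (If t') t)) at 1 by ring.
      eapply Rle_trans. apply Rabs_triang. rewrite Rabs_Ropp.
      rewrite (Rabs_minus_sym u). fold A. lra. }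
    assert (0 <= A) by apply Rabs_pos. assert (0 <= B) by apply Rabs_pos.
    nra. }
  set (phi := fun t => G (If t) t - v).
  assert (Hphil : forall t t', Rabs (phi t - phi t') <= (L + 2) * Rabs (t - t')).
  { intros t t'. unfold phi.
    pose proof (GLI (If t) (If t') t (HIr t) (HIr t')) as h1.
    pose proof (GLT (If t') t t' (HIr t')) as h2.
    pose proof (HIl t t') as h3.
    replace (G (If t) t - v - (G (If t') t' - v)) with
      ((G (If t) t - G (If t') t) + (G (If t') t - G (If t') t' - (t - t')) + (t - t')) by ring.
    eapply Rle_trans. apply Rabs_triang. eapply Rle_trans. apply Rplus_le_compat_r. apply Rabs_triang.
    assert (0 <= Rabs (t - t')) by apply Rabs_pos.
    assert (0 <= Rabs (If t - If t')) by apply Rabs_pos.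
    assert ((L + ce) * Rabs (If t - If t') <= (L + ce) * Rabs (t - t')) by (apply Rmult_le_compat_l; lra).
    nra. }
  assert (Hphib : forall t, Rabs (phi t + v - t - om u) <= (1 + L) * ce).
  { intro t. unfold phi.
    destruct (Hb (If t) t (HIr t)) as [_ [h _]].
    pose proof (om_lip (If t) u (HIr t) ltac:(lra)) as h2.
    pose proof (HIu t) as h3.
    replace (G (If t) t - v + v - t - om u) with ((G (If t) t - (t + om (If t))) + (om (If t) - om u)) by ring.
    eapply Rle_trans. apply Rabs_triang.
    assert (L * Rabs (If t - u) <= L * ce) by (apply Rmult_le_compat_l; lra). lra. }
  set (K := (1 + L) * ce).
  destruct (Ranalysis5.IVT_interv phi (v - om u - K - 1) (v - om u + K + 1)) as [t0 [Ht0 Hphi0]].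
  - intros a _. apply (lip_cont phi (L + 2)). exact Hphil.
  - assert (0 <= K) by (unfold K; nra). lra.
  - pose proof (Hphib (v - om u - K - 1)) as h. apply abs_le in h. fold K in h. lra.
  - pose proof (Hphib (v - om u + K + 1)) as h. apply abs_le in h. fold K in h. lra.
  - exists (If t0), t0. destruct (HIf t0) as [_ e]. split; [exact e|]. split.
    + unfold phi in Hphi0. lra.
    + split. apply HIu. pose proof (Hphib t0) as h. rewrite Hphi0 in h.
      replace (t0 - (v - om u)) with (-(0 + v - t0 - om u)) by ring. rewrite Rabs_Ropp. exact h.
Qed.


Lemma pow_ge1 x n : 1 <= x -> 1 <= x ^ n.
Proof. intro h. induction n; simpl. lra. nra. Qed.

Lemma back (b rho : R) : 0 <= ce -> ce <= 1/2 -> 0 <= L -> 0 < rho ->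
  Im <= b - 3 * rho -> b + 3 * rho <= Ip ->
  forall n d c2 w, ce <= d -> (2 * (1 + L)) ^ n * d <= rho ->
  Rabs (fst w - b) <= d -> Rabs (snd w - c2) <= d ->
  exists z, citer F G n z = w /\ Rabs (fst z - b) <= (2 * (1 + L)) ^ n * d /\
    Rabs (snd z - (c2 - INR n * om b)) <= (2 * (1 + L)) ^ n * d /\
    forall j, (j <= n)%nat -> Rabs (fst (citer F G j z) - b) <= rho.
Proof.
  intros Hce Hce2 HL0 Hr Hb1 Hb2.
  set (Kc := 2 * (1 + L)).
  assert (HK : 2 <= Kc) by (unfold Kc; lra).
  induction n as [|n IH]; intros d c2 w Hd Hdr Hw1 Hw2.
  - exists w. simpl. rewrite Rmult_1_l. replace (c2 - 0 * om b) with c2 by ring.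
    simpl in Hdr. split; [reflexivity|]. split; [exact Hw1|]. split; [exact Hw2|].
    intros j Hj. assert (j = 0%nat) by lia. subst j. simpl. lra.
  - assert (Hp : 1 <= Kc ^ n) by (apply pow_ge1; lra).
    assert (Hd0 : 0 <= d) by lra.
    assert (HdS : Kc ^ S n * d = Kc ^ n * (Kc * d)) by (simpl; ring).
    assert (Hdr' : d <= rho).
    { rewrite HdS in Hdr. assert (d <= Kc * d) by nra. nra. }
    apply abs_le in Hw1. apply abs_le in Hw2.
    destruct (step (fst w) (snd w) (2 * rho)) as (I & t & e1 & e2 & h1 & h2); try lra.
    assert (HomL : Rabs (om (fst w) - om b) <= L * Rabs (fst w - b)) by (apply om_lip; lra).
    assert (Habs : Rabs (fst w - b) <= d) by (apply abs_le; lra).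
    assert (L * Rabs (fst w - b) <= L * d) by (apply Rmult_le_compat_l; lra).
    apply abs_le in h1. apply abs_le in h2. apply abs_le in HomL.
    destruct (IH (Kc * d) (c2 - om b) (I, t)) as (z & ez & hz1 & hz2 & hz3).
    + nra.
    + rewrite <- HdS. exact Hdr.
    + simpl. apply abs_le. nra.
    + simpl. apply abs_le. unfold Kc. nra.
    + exists z. split.
      { change (cmap F G (citer F G n z) = w). rewrite ez. unfold cmap. simpl. rewrite e1, e2.
        destruct w; reflexivity. }
      rewrite HdS. split; [exact hz1|]. split.
      { rewrite S_INR. replace (c2 - (INR n + 1) * om b) with (c2 - om b - INR n * om b) by ring. exact hz2. }
      intros j Hj. destruct (Nat.eq_dec j (S n)) as [->|Hne].
      * change (Rabs (fst (cmap F G (citer F G n z)) - b) <= rho). rewrite ez. unfold cmap. simpl.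
        rewrite e1. apply abs_le. lra.
      * apply hz3. lia.
Qed.

End Step.

Lemma sq_lt x d : 0 < d -> x ^ 2 < d ^ 2 -> -d < x < d.
Proof. intros. split; nra. Qed.

Theorem mainTheorem10
  (Im Ip : R) (om : R -> R)
  (F G : R -> R -> R -> R) (C : R)
  (I1 I2 : R) (f g : R -> R) (a delta : R) :
  C1_real om ->
  (forall I, Im <= I <= Ip -> 0 < Derive om I) ->
  (forall e, 0 < e ->
     C1_plane (F e) /\ C1_plane (G e) /\
     (forall I t, F e I (t + 1) = F e I t /\ G e I (t + 1) = G e I t + 1)) ->
  (forall e, 0 < e -> forall I t, Im <= I <= Ip ->
     Rabs (F e I t - I) <= C * e /\
     Rabs (G e I t - (t + om I)) <= C * e /\
     Rabs (pdI (F e) I t - 1) <= C * e /\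
     Rabs (pdT (F e) I t) <= C * e /\
     Rabs (pdI (G e) I t - Derive om I) <= C * e /\
     Rabs (pdT (G e) I t - 1) <= C * e) ->
  Im <= I1 -> I1 < I2 -> I2 <= Ip ->
  C1_on_open I1 I2 f -> C1_on_open I1 I2 g ->
  I1 < a < I2 -> 0 < delta ->
  exists eps0 : R, 0 < eps0 /\
  exists N : nat, exists b : R, I1 < b < I2 /\
  exists delta' : R, 0 < delta' /\
  forall e, 0 < e < eps0 ->
    forall y, in_cyl_ball (b, g b) delta' y ->
      exists z : R * R, exists k : Z,
        in_cyl_ball (a, f a) delta z /\
        (forall j : nat, (j < N)%nat ->
           Im <= fst (citer (F e) (G e) j z) <= Ip) /\
        citer (F e) (G e) N z = (fst y, snd y + IZR k).
Proof.
  intros Hom Hpos HT Hbd HI1 HI12 HI2 Hf Hg Ha Hdel.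
  assert (HC : 0 <= C).
  { destruct (Hbd 1 ltac:(lra) Im 0 ltac:(lra)) as [h _].
    pose proof (Rabs_pos (F 1 Im 0 - Im)). lra. }
  assert (Hom_d : forall x : R, ex_derive om x) by (intro x; exact (proj1 (Hom x))).
  destruct (continuity_ab_maj (fun x => Rabs (Derive om x)) Im Ip ltac:(lra)) as [Mx [HMx _]].
  { intros c _. apply (continuity_pt_comp (Derive om) Rabs).
    apply continuity_pt_filterlim. exact (proj2 (Hom c)). apply Rcontinuity_abs. }
  set (L := Rabs (Derive om Mx)).
  assert (HL0 : 0 <= L) by apply Rabs_pos.
  assert (HL : forall x, Im <= x <= Ip -> Rabs (Derive om x) <= L) by (intros; apply HMx; auto).
  set (eta := Rmin (delta / 4) ((I2 - a) / 2)).
  assert (Heta : 0 < eta /\ eta <= delta / 4 /\ eta <= (I2 - a) / 2).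
  { unfold eta, Rmin. destruct Rle_dec; lra. }
  destruct Heta as (Heta0 & Heta1 & Heta2).
  assert (Hc : 0 < om (a + eta) - om a).
  { destruct (MVT_gen om a (a + eta) (Derive om)) as [xi [Hxi Exi]].
    - intros x _. apply Derive_correct, Hom_d.
    - intros x _. apply exd_cont, Hom_d.
    - rewrite Exi. apply Rmult_lt_0_compat; [|lra]. apply Hpos.
      revert Hxi. unfold Rmin, Rmax. destruct Rle_dec; lra. }
  set (c := om (a + eta) - om a) in *.
  set (Q := (Rabs (g (a + eta) - g a) + 2) / c).
  assert (HQ : 0 < Q).
  { unfold Q. pose proof (Rabs_pos (g (a + eta) - g a)). apply Rdiv_lt_0_compat; lra. }
  destruct (archimed Q) as [HQ1 _].
  set (N := Z.to_nat (up Q)).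
  assert (HN : INR N = IZR (up Q)).
  { unfold N. rewrite INR_IZR_INZ, Z2Nat.id. reflexivity. apply Z.lt_le_incl, lt_0_IZR. lra. }
  assert (HNc : Rabs (g (a + eta) - g a) + 2 <= INR N * c).
  { rewrite HN. assert (Q * c = Rabs (g (a + eta) - g a) + 2) by (unfold Q; field; lra).
    nra. }
  set (h := fun x => g x - INR N * om x).
  set (n0 := up (h (a + eta) - f a)).
  destruct (archimed (h (a + eta) - f a)) as [Hn1 Hn2]. fold n0 in Hn1, Hn2.
  assert (Hga : g a - g (a + eta) >= - Rabs (g (a + eta) - g a)).
  { pose proof (Rle_abs (g (a + eta) - g a)). lra. }
  destruct (Ranalysis5.IVT_interv (fun x => f a + IZR n0 - h x) a (a + eta)) as [b [Hb1 Hb2]].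
  - intros x Hx. apply continuity_pt_minus.
    + apply continuity_pt_const. intros u v; reflexivity.
    + apply continuity_pt_minus. apply exd_cont. apply (proj1 (Hg x ltac:(lra))).
      apply continuity_pt_scal. apply exd_cont, Hom_d.
  - lra.
  - unfold h in *. unfold c in HNc. nra.
  - lra.
  - assert (Hhb : g b - INR N * om b = f a + IZR n0) by (unfold h in Hb2; lra).
    clear Hb2.
    assert (HbI : I1 < b < I2) by lra.
    set (rho := Rmin (Rmin (delta / 4) (1/2)) (Rmin ((b - Im) / 3) ((Ip - b) / 3))).
    assert (Hrho : 0 < rho /\ rho <= delta / 4 /\ rho <= 1/2 /\ Im <= b - 3 * rho /\ b + 3 * rho <= Ip).
    { unfold rho, Rmin. repeat destruct Rle_dec; lra. }
    destruct Hrho as (Hr0 & Hr1 & Hr2 & Hr3 & Hr4).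
    set (Kc := 2 * (1 + L)).
    assert (HKN : 1 <= Kc ^ N) by (apply pow_ge1; unfold Kc; lra).
    set (dl := rho / Kc ^ N).
    assert (Hdl : 0 < dl) by (unfold dl; apply Rdiv_lt_0_compat; lra).
    assert (HKdl : Kc ^ N * dl = rho) by (unfold dl; field; lra).
    assert (Hdlr : dl <= rho) by nra.
    exists (dl / (C + 1)). split. apply Rdiv_lt_0_compat; lra.
    exists N, b. split. exact HbI. exists dl. split. exact Hdl.
    intros e [He0 He1] y [k0 Hy].
    assert (Hce : C * e <= dl).
    { assert (e * (C + 1) < dl).
      { apply Rmult_lt_reg_r with (/ (C + 1)). apply Rinv_0_lt_compat; lra.
        rewrite Rmult_assoc, Rinv_r by lra. rewrite Rmult_1_r. exact He1. }
      nra. }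
    assert (Hce0 : 0 <= C * e) by nra.
    simpl in Hy.
    pose proof (pow2_ge_0 (fst y - b)). pose proof (pow2_ge_0 (snd y - g b - IZR k0)).
    assert (Hy1 : Rabs (fst y - b) <= dl).
    { apply abs_le. assert (Hq : (fst y - b) ^ 2 < dl ^ 2) by lra. apply sq_lt in Hq; lra. }
    assert (Hy2 : Rabs (snd y - (g b + IZR k0)) <= dl).
    { apply abs_le. assert (Hq : (snd y - (g b + IZR k0)) ^ 2 < dl ^ 2) by (replace (snd y - (g b + IZR k0)) with (snd y - g b - IZR k0) by ring; lra). apply sq_lt in Hq; lra. }
    destruct (HT e He0) as [HF [HG _]].
    destruct (back Im Ip L (C * e) om (F e) (G e) Hom_d HL
      (fun I t => conj (proj1 (HF I t)) (proj1 (proj2 (HF I t))))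
      (fun I t => conj (proj1 (HG I t)) (proj1 (proj2 (HG I t))))
      (Hbd e He0) b rho Hce0 ltac:(lra) HL0 Hr0 Hr3 Hr4 N dl (g b + IZR k0) y Hce
      ltac:(fold Kc; lra) Hy1 Hy2) as (z & Ez & Hz1 & Hz2 & Hz3).
    fold Kc in Hz1, Hz2. rewrite HKdl in Hz1, Hz2.
    exists z, 0%Z. split; [|split].
    + exists (n0 + k0)%Z. simpl. rewrite plus_IZR.
      apply abs_le in Hz1. apply abs_le in Hz2.
      assert (-(delta/2) <= fst z - a <= delta / 2) by lra.
      assert (-(delta/4) <= snd z - f a - (IZR n0 + IZR k0) <= delta / 4) by lra.
      nra.
    + intros j Hj. pose proof (Hz3 j ltac:(lia)) as h'. apply abs_le in h'. lra.
    + rewrite Ez. rewrite Rplus_0_r. destruct y; reflexivity.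
Qed.
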